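(* Let $f=f(x_1,\ldots,x_n)$ be a positive Boolean function with exactly $k\ge 0$ relevant variables. Then the number $r(f)$ of extremal points of $f$ satisfies $r(f)\ge k+1$. Moreover, $r(f)=k+1$ if and only if $f$ is linear read-once.
   Context: Let $B=\{0,1\}$. For $\mathbf{x},\mathbf{y}\in B^n$, write $\mathbf{x}\preceq\mathbf{y}$ if $(\mathbf{x})_i=1$ implies $(\mathbf{y})_i=1$ for all $i$. A Boolean function $f$ on $B^n$ is positive if $f(\mathbf{x})=1$ and $\mathbf{x}\preceq\mathbf{y}$ imply $f(\mathbf{y})=1$. A maximal zero of $f$ is a $\preceq$-maximal point of $f^{-1}(0)$; a minimal one is a $\preceq$-minimal point of $f^{-1}(1)$; extremal points are the maximal zeros and minimal ones, and $r(f)$ denotes their number. A variable $x_k$ is relevant for $f$ if the functions $f_{|x_k=0}$ and $f_{|x_k=1}$ (obtained by fixing $x_k$) are not identical. A function is linear read-once (lro) if it is constant or can be represented by a nested formula, defined recursively: the literals $x$ and $\overline{x}$ are nested formulas; and $x\vee t$, $x\wedge t$, $\overline{x}\vee t$, $\overline{x}\wedge t$ are nested formulas whenever $x$ is a variable and $t$ is a nested formula containing neither $x$ nor $\overline{x}$. *)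

(* Defs.v *)
From mathcomp Require Import all_boot.
Set Implicit Arguments. Unset Strict Implicit. Unset Printing Implicit Defensive.

(* Points of B^n = {0,1}^n, coordinates indexed by 'I_n; 1 = true, 0 = false *)
Definition pt (n : nat) := {ffun 'I_n -> bool}.

Definition pleq n (x y : pt n) : bool := [forall i, x i ==> y i].

Definition positive n (f : pt n -> bool) : Prop :=
  forall x y : pt n, f x -> pleq x y -> f y.

Definition maxzero n (f : pt n -> bool) (x : pt n) : bool :=
  ~~ f x && [forall y : pt n, (~~ f y && pleq x y) ==> (y == x)].

Definition minone n (f : pt n -> bool) (x : pt n) : bool :=
  f x && [forall y : pt n, (f y && pleq y x) ==> (y == x)].

Definition r n (f : pt n -> bool) : nat :=
  #|[set x : pt n | maxzero f x || minone f x]|.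

Definition fixc n (x : pt n) (k : 'I_n) (b : bool) : pt n :=
  [ffun j => if j == k then b else x j].

Definition relevantb n (f : pt n -> bool) (k : 'I_n) : bool :=
  [exists x : pt n, f (fixc x k false) != f (fixc x k true)].

Definition nrel n (f : pt n -> bool) : nat := #|[set k : 'I_n | relevantb f k]|.

(* Lit i s     : the literal x_i (s = true) or its negation (s = false).
   Node i s c t: l ∨ t (c = true) or l ∧ t (c = false), where l is the
                 literal of x_i with sign s. *)
Inductive nested (n : nat) : Type :=
  | Lit : 'I_n -> bool -> nested n
  | Node : 'I_n -> bool -> bool -> nested n -> nested n.

Fixpoint nvars n (t : nested n) : seq 'I_n :=
  match t with
  | Lit i _ => [:: i]
  | Node i _ _ t' => i :: nvars t'
  end.

Fixpoint wf_nested n (t : nested n) : bool :=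
  match t with
  | Lit _ _ => true
  | Node i _ _ t' => (i \notin nvars t') && wf_nested t'
  end.

Definition lit_eval n (i : 'I_n) (s : bool) (x : pt n) : bool :=
  if s then x i else ~~ x i.

Fixpoint neval n (t : nested n) (x : pt n) : bool :=
  match t with
  | Lit i s => lit_eval i s x
  | Node i s c t' => if c then lit_eval i s x || neval t' x
                     else lit_eval i s x && neval t' x
  end.

Definition lro n (f : pt n -> bool) : Prop :=
  (exists c : bool, forall x : pt n, f x = c) \/
  (exists t : nested n, wf_nested t /\ forall x : pt n, f x = neval t x).

(* Main.v *)
Require Import Defs.
From mathcomp Require Import all_boot.
From Stdlib Require Import FunctionalExtensionality.
From mathcomp Require Import zify.
From Stdlib Require Import Lia.
Set Implicit Arguments. Unset Strict Implicit. Unset Printing Implicit Defensive.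


Section Basics.
Variable n : nat.
Implicit Types (x y z a : pt n) (f g : pt n -> bool).

Lemma fixcE x k b l : fixc x k b l = if l == k then b else x l.
Proof. by rewrite /fixc ffunE. Qed.

Lemma fixc_at x k b : fixc x k b k = b.
Proof. by rewrite fixcE eqxx. Qed.

Lemma fixc_ne x k b l : l != k -> fixc x k b l = x l.
Proof. by rewrite fixcE => /negPf ->. Qed.

Lemma fixc_id x k : fixc x k (x k) = x.
Proof. by apply/ffunP => l; rewrite fixcE; case: eqP => // ->. Qed.

Lemma fixc_idb x k b : x k = b -> fixc x k b = x.
Proof. by move=> <-; apply: fixc_id. Qed.

Lemma fixcK x k b c : fixc (fixc x k b) k c = fixc x k c.
Proof. by apply/ffunP => l; rewrite !fixcE; case: eqP. Qed.

Lemma fixcC x k l b c : k != l -> fixc (fixc x k b) l c = fixc (fixc x l c) k b.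
Proof.
move=> nkl; apply/ffunP => m; rewrite !fixcE.
case: (eqVneq m l) => [ml|nml]; case: (eqVneq m k) => [mk|nmk] //.
by move: nkl; rewrite -ml -mk eqxx.
Qed.

Lemma pleqP x y : reflect (forall l, x l -> y l) (pleq x y).
Proof.
apply: (iffP forallP) => H l; first by move=> xl; have := H l; rewrite xl.
by apply/implyP; apply: H.
Qed.

Lemma pleq_refl x : pleq x x.
Proof. by apply/pleqP. Qed.

Lemma pleq_trans x y z : pleq x y -> pleq y z -> pleq x z.
Proof. by move=> /pleqP H1 /pleqP H2; apply/pleqP => l /H1 /H2. Qed.

Lemma pleq_fixc x y k b : pleq x y -> pleq (fixc x k b) (fixc y k b).
Proof. by move=> /pleqP H; apply/pleqP => l; rewrite !fixcE; case: eqP => // _ /H. Qed.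

Lemma pleq_fixcF x k : pleq (fixc x k false) x.
Proof. by apply/pleqP => l; rewrite fixcE; case: eqP. Qed.

Lemma pleq_fixcT x k : pleq x (fixc x k true).
Proof. by apply/pleqP => l; rewrite fixcE; case: eqP. Qed.

Lemma minoneP f x :
  reflect (f x /\ forall y, f y -> pleq y x -> y = x) (minone f x).
Proof.
apply: (iffP andP) => [[fx /forallP H]|[fx H]]; split=> //.
  by move=> y fy le; have := H y; rewrite fy le /= => /eqP.
by apply/forallP => y; apply/implyP => /andP[fy le]; rewrite (H y fy le).
Qed.

Lemma maxzeroP f x :
  reflect (~~ f x /\ forall y, ~~ f y -> pleq x y -> y = x) (maxzero f x).
Proof.
apply: (iffP andP) => [[fx /forallP H]|[fx H]]; split=> //.
  by move=> y fy le; have := H y; rewrite fy le /= => /eqP.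
by apply/forallP => y; apply/implyP => /andP[fy le]; rewrite (H y fy le).
Qed.

Definition sz x := #|[set l | x l]|.

Lemma pleq_sub x y : pleq x y -> [set l | x l] \subset [set l | y l].
Proof. by move=> /pleqP H; apply/subsetP => l; rewrite !inE; apply: H. Qed.

Lemma pleq_sz x y : pleq x y -> sz x <= sz y.
Proof. by move=> /pleq_sub /subset_leq_card. Qed.

Lemma pleq_sz_eq x y : pleq x y -> sz y <= sz x -> x = y.
Proof.
move=> le szle.
have /eqP E : [set l | x l] == [set l | y l] by rewrite eqEcard pleq_sub.
apply/ffunP => l; have := congr1 (fun A : {set 'I_n} => l \in A) E; by rewrite !inE.
Qed.

Lemma minex f y : f y -> exists a, minone f a /\ pleq a y.
Proof.
move=> fy.
case: (arg_minnP sz (P := fun a => f a && pleq a y) (i0 := y)); first by rewrite fy pleq_refl.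
move=> a /andP[fa lay] Hmin; exists a; split=> //.
apply/minoneP; split=> // z fz lza.
apply: (pleq_sz_eq lza); apply: Hmin; rewrite fz /=.
exact: pleq_trans lza lay.
Qed.

Lemma maxex f y : ~~ f y -> exists z, maxzero f z /\ pleq y z.
Proof.
move=> fy.
case: (arg_maxnP sz (P := fun a => ~~ f a && pleq y a) (i0 := y)); first by rewrite fy pleq_refl.
move=> a /andP[fa lay] Hmax; exists a; split=> //.
apply/maxzeroP; split=> // z fz lza.
apply/esym/(pleq_sz_eq lza); apply: Hmax; rewrite fz /=.
exact: pleq_trans lay lza.
Qed.

Definition rs f k b := fun x => f (fixc x k b).

Lemma rs_pos f k b : positive f -> positive (rs f k b).
Proof. by move=> P x y fx le; apply: P fx (pleq_fixc _ _ le). Qed.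

Lemma relevantP f k :
  reflect (exists x, f (fixc x k false) != f (fixc x k true)) (relevantb f k).
Proof. exact: existsP. Qed.

Lemma irrel f k x b : ~~ relevantb f k -> f (fixc x k b) = f x.
Proof.
move=> H; have E : f (fixc x k false) = f (fixc x k true).
  by apply/eqP; apply: contraNT H => ne; apply/relevantP; exists x.
by rewrite -{2}(fixc_id x k); case: b; case: (x k).
Qed.

End Basics.


Section Const.
Variable n : nat.
Implicit Types (x y z a : pt n) (f g : pt n -> bool).

Lemma nrel0_const f : nrel f = 0 -> forall x y, f x = f y.
Proof.
move=> /eqP; rewrite cards_eq0 => /eqP R0.
have irr k : ~~ relevantb f k.
  apply/negP => rk; have : k \in [set k | relevantb f k] by rewrite inE.
  by rewrite R0 inE.
suff H : forall m x y, #|[set l | x l != y l]| = m -> f x = f y.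
  by move=> x y; apply: (H _ x y erefl).
elim=> [|m IH] x y.
  move/eqP; rewrite cards_eq0 => /eqP E; congr f; apply/ffunP => l.
  have : l \notin [set l | x l != y l] by rewrite E inE.
  by rewrite inE negbK => /eqP.
move=> Hc.
have [l Hl] : exists l, l \in [set l | x l != y l].
  by apply/set0Pn; rewrite -card_gt0 Hc.
rewrite -(irrel x (y l) (irr l)); apply: IH.
have -> : [set l' | fixc x l (y l) l' != y l'] = [set l' | x l' != y l'] :\ l.
  apply/setP => l'; rewrite !inE fixcE.
  by case: (eqVneq l' l) => [->|ne]; rewrite ?eqxx.
by move: Hc; rewrite (cardsD1 l) Hl => -[].
Qed.

Lemma const_nrel0 f c : (forall x, f x = c) -> nrel f = 0.
Proof.
move=> H; apply/eqP; rewrite cards_eq0; apply/eqP/setP => k; rewrite !inE.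
by apply/negbTE/negP => /relevantP [x]; rewrite !H eqxx.
Qed.

Definition ptzero : pt n := [ffun _ => false].
Definition ptone : pt n := [ffun _ => true].

Lemma const_r f c : (forall x, f x = c) -> r f = 1.
Proof.
move=> H; rewrite /r.
case: c H => H.
  rewrite (_ : [set x | _] = [set ptzero]) ?cards1 //; apply/setP => x; rewrite !inE.
  have -> : maxzero f x = false by apply/negP => /maxzeroP [] ; rewrite H.
  apply/minoneP/eqP => [[_ Hm]|->].
    by apply/esym/Hm; rewrite ?H //; apply/pleqP => l; rewrite ffunE.
  split=> // y _ /pleqP le; apply/ffunP => l; rewrite ffunE.
  by apply/negP => /le; rewrite ffunE.
rewrite (_ : [set x | _] = [set ptone]) ?cards1 //; apply/setP => x; rewrite !inE.
have -> : minone f x = false by apply/negP => /minoneP [] ; rewrite H.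
rewrite orbF; apply/maxzeroP/eqP => [[_ Hm]|->].
  by apply/esym/Hm; rewrite ?H //; apply/pleqP => l; rewrite ffunE.
split; first by rewrite H.
move=> y _ /pleqP le; apply/ffunP => l; rewrite ffunE; apply: le; by rewrite ffunE.
Qed.

End Const.


Definition E n (h : pt n -> bool) := [set x | maxzero h x || minone h x].

Lemma rE n (h : pt n -> bool) : r h = #|E h|.
Proof. by []. Qed.

Section Split.
Variable n : nat.
Implicit Types (x y z a : pt n).
Variable f : pt n -> bool.
Hypothesis fpos : positive f.
Variable i : 'I_n.
Let f0 := rs f i false.
Definition gmap x := if f x && x i then fixc x i false else x.

Lemma f0E x : f0 x = f (fixc x i false).
Proof. by []. Qed.

Lemma f0_le x : f0 x -> f x.
Proof. by move=> h; apply: fpos h (pleq_fixcF _ _). Qed.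

Lemma minone_f0_i x : minone f0 x -> x i = false.
Proof.
case/minoneP => fx H.
have := H (fixc x i false); rewrite f0E fixcK => /(_ fx (pleq_fixcF _ _)) <-.
by rewrite fixc_at.
Qed.

Lemma maxzero_f0_i x : maxzero f0 x -> x i = true.
Proof.
case/maxzeroP => fx H.
have := H (fixc x i true); rewrite f0E fixcK => /(_ fx (pleq_fixcT _ _)) <-.
by rewrite fixc_at.
Qed.

Lemma gE x : x \in E f0 -> gmap x \in E f.
Proof.
rewrite !inE /gmap => /orP [mz|mo].
  have xi := maxzero_f0_i mz.
  move/maxzeroP: mz => [f0x H]; rewrite xi andbT.
  case fx: (f x).
    apply/orP; left; apply/maxzeroP; split; first by rewrite -f0E.
    move=> y fy le; case yi: (y i).
      have : pleq x y.
        apply/pleqP => l; case: (eqVneq l i) => [->|ne]; first by rewrite yi.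
        by move/pleqP: le => le; rewrite -(fixc_ne x false ne) => /le.
      by move/(fpos fx); rewrite (negPf fy).
    have := H (fixc y i true).
    rewrite f0E fixcK (fixc_idb yi) fy => /(_ isT).
    have le' : pleq x (fixc y i true).
      apply/pleqP => l; rewrite fixcE; case: (eqVneq l i) => // ne.
      by rewrite -(fixc_ne x false ne); move/pleqP: le; apply.
    move/(_ le') => <-; by rewrite fixcK fixc_idb.
  apply/orP; left; apply/maxzeroP; split; first by rewrite fx.
  move=> y fy le; apply: H => //; apply/negP => /f0_le; exact/negP.
have xi := minone_f0_i mo.
move/minoneP: mo => [f0x H]; rewrite xi andbF.
apply/orP; right; apply/minoneP; split; first by rewrite -(fixc_idb xi).
move=> y fy le; apply: H => //.
have yi : y i = false by apply/negP => /(pleqP _ _ le); rewrite xi.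
by rewrite f0E fixc_idb.
Qed.

Lemma ginj : {in E f0 &, injective gmap}.
Proof.
have key x : x \in E f0 -> x i -> ~~ f0 x.
  rewrite inE => /orP [/maxzeroP [] //|/minone_f0_i ->] //.
have key2 x : x \in E f0 -> ~~ x i -> f0 x.
  rewrite inE => /orP [/maxzero_f0_i ->|/minoneP [] //] //.
move=> x y Ex Ey; rewrite /gmap.
case: (boolP (f x && x i)) => [/andP [fx xi]|nx]; case: (boolP (f y && y i)) => [/andP [fy yi]|ny].
- move=> e; apply/ffunP => l; case: (eqVneq l i) => [->|ne]; first by rewrite xi yi.
  by rewrite -(fixc_ne x false ne) e fixc_ne.
- move=> e; have yi : y i = false by rewrite -e fixc_at.
  have := key2 y Ey; rewrite yi => /(_ isT); rewrite -e f0E fixcK.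
  by have := key x Ex xi; rewrite f0E => /negPf ->.
- move=> e; have xi : x i = false by rewrite e fixc_at.
  have := key2 x Ex; rewrite xi => /(_ isT); rewrite e f0E fixcK.
  by have := key y Ey yi; rewrite f0E => /negPf ->.
- by [].
Qed.

Definition Dset := E f :\: [set gmap x | x in E f0].

Lemma img_sub : [set gmap x | x in E f0] \subset E f.
Proof. by apply/subsetP => _ /imsetP [x Ex ->]; apply: gE. Qed.

Lemma count_split : r f = r f0 + #|Dset|.
Proof.
rewrite !rE /Dset cardsD (setIidPr img_sub) card_in_imset; last exact: ginj.
rewrite subnKC //; rewrite -(card_in_imset ginj); apply: subset_leq_card img_sub.
Qed.

Lemma missA a : minone f a -> a i -> a \in Dset.
Proof.
move=> mo ai; rewrite /Dset !inE mo orbT andbT.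
apply/imsetP => -[x Ex e]; move: e; rewrite /gmap.
case: ifP => [/andP [_ xi] e|nx e].
  by move: ai; rewrite e fixc_at.
move: nx; rewrite -e ai andbT; move/minoneP: mo => [-> _] //.
Qed.

Lemma imgZ z : maxzero f z -> z i -> z \in [set gmap x | x in E f0] -> maxzero f0 z.
Proof.
move=> mz zi /imsetP [x Ex e]; move: e; rewrite /gmap.
case: ifP => [/andP [_ xi] e|nx e].
  by move: zi; rewrite e fixc_at.
move: Ex; rewrite -e inE => /orP [//|/minone_f0_i]; by rewrite zi.
Qed.

Lemma Dsub_dom : (forall x, f (fixc x i true)) -> Dset \subset [set fixc (ptzero n) i true].
Proof.
move=> dom; apply/subsetP => x; rewrite /Dset !inE => /andP [nimg Ex].
case xi: (x i).
  have fx : f x by rewrite -(fixc_idb xi).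
  move: Ex; have -> : maxzero f x = false by apply/negbTE/negP => /maxzeroP []; rewrite fx.
  move=> /minoneP [_ H]; apply/eqP/esym/H; first by apply: dom.
  apply/pleqP => l; rewrite fixcE ffunE; case: eqP => [->|] //.
exfalso; move/negP: nimg; apply; apply/imsetP.
move: Ex => /orP [mz|mo].
  exists (fixc x i true); last first.
    by rewrite /gmap dom fixc_at fixcK fixc_idb.
  rewrite inE; apply/orP; left; apply/maxzeroP; split.
    by rewrite f0E fixcK fixc_idb //; case/maxzeroP: mz.
  move=> y fy le; case/maxzeroP: mz => _ H.
  have := H (fixc y i false); rewrite -f0E fy => /(_ isT).
  have le' : pleq x (fixc y i false).
    by rewrite -{1}(fixc_idb xi); rewrite -(fixcK x i true false); apply: pleq_fixc.
  move/(_ le') => e.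
  have yi : y i = true by apply: (pleqP _ _ le); rewrite fixc_at.
  by rewrite -e fixcK fixc_idb.
exists x; last by rewrite /gmap xi andbF.
rewrite inE; apply/orP; right; apply/minoneP; case/minoneP: mo => fx H; split.
  by rewrite f0E fixc_idb.
move=> y fy le; apply: H => //.
have yi : y i = false by apply/negP => /(pleqP _ _ le); rewrite xi.
by rewrite -(fixc_idb yi).
Qed.

End Split.


Section Dual.
Variable n : nat.
Implicit Types (x y z a : pt n) (f g : pt n -> bool).

Definition cpl x : pt n := [ffun l => ~~ x l].
Definition dual f := fun x => ~~ f (cpl x).

Lemma cplE x l : cpl x l = ~~ x l. Proof. by rewrite ffunE. Qed.
Lemma cplK : involutive cpl.
Proof. by move=> x; apply/ffunP => l; rewrite !ffunE negbK. Qed.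
Lemma cpl_inj : injective cpl. Proof. exact: inv_inj cplK. Qed.

Lemma pleq_cpl x y : pleq (cpl x) (cpl y) = pleq y x.
Proof.
apply/pleqP/pleqP => H l.
  by apply: contraTT => nx; have := H l; rewrite !cplE; apply.
by rewrite !cplE; apply: contra; apply: H.
Qed.

Lemma fixc_cpl x k b : fixc (cpl x) k b = cpl (fixc x k (~~ b)).
Proof. by apply/ffunP => l; rewrite !fixcE !cplE fixcE; case: (l == k); rewrite ?negbK. Qed.

Lemma dualK f : dual (dual f) = f.
Proof. by apply: functional_extensionality => x; rewrite /dual negbK cplK. Qed.

Lemma dual_pos f : positive f -> positive (dual f).
Proof.
move=> P x y; rewrite /dual => fx le; apply: contra fx => fy.
by apply: (P _ _ fy); rewrite pleq_cpl.
Qed.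

Lemma minone_dual f x : minone (dual f) x = maxzero f (cpl x).
Proof.
apply/minoneP/maxzeroP => -[fx H]; split => //.
  move=> y fy le; rewrite -(cplK y); congr cpl; apply: H; rewrite /dual ?cplK //.
  by rewrite -pleq_cpl cplK.
move=> y fy le; apply: cpl_inj; apply: H => //; by rewrite pleq_cpl.
Qed.

Lemma maxzero_dual f x : maxzero (dual f) x = minone f (cpl x).
Proof.
apply/maxzeroP/minoneP => -[fx H].
  split; first by move: fx; rewrite /dual negbK.
  move=> y fy le; rewrite -(cplK y); congr cpl; apply: H; rewrite /dual ?cplK ?negbK //.
  by rewrite -pleq_cpl cplK.
split; first by rewrite /dual fx.
move=> y fy le; apply: cpl_inj; apply: H; first by rewrite /dual negbK in fy.
by rewrite pleq_cpl.
Qed.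

Lemma r_dual f : r (dual f) = r f.
Proof.
rewrite !rE.
have -> : E (dual f) = [set cpl x | x in E f]; last by rewrite card_imset //; exact: cpl_inj.
apply/setP => x.
rewrite inE minone_dual maxzero_dual orbC.
apply/idP/imsetP => [h|[y Ey ->]]; first by exists (cpl x); rewrite ?inE ?cplK.
by move: Ey; rewrite inE cplK.
Qed.

Lemma relevant_dual f k : relevantb (dual f) k = relevantb f k.
Proof.
apply/relevantP/relevantP => -[x H].
  exists (cpl x); move: H; rewrite /dual !fixc_cpl /=.
  by case: (f (cpl (fixc x k false))) (f (cpl (fixc x k true))) => [] [].
exists (cpl x); rewrite /dual !fixc_cpl /= !cplK; move: H.
by case: (f (fixc x k false)) (f (fixc x k true)) => [] [].
Qed.

Lemma nrel_dual f : nrel (dual f) = nrel f.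
Proof. by rewrite /nrel; apply: eq_card => k; rewrite !inE relevant_dual. Qed.

Lemma dual_rs f k b : dual (rs f k b) = rs (dual f) k (~~ b).
Proof.
by apply: functional_extensionality => x; rewrite /dual /rs fixc_cpl.
Qed.

Fixpoint ndual (t : nested n) : nested n :=
  match t with
  | Lit i s => Lit i s
  | Node i s c t' => Node i s (~~ c) (ndual t')
  end.

Lemma ndual_vars t : nvars (ndual t) = nvars t.
Proof. by elim: t => //= i s c t ->. Qed.

Lemma ndual_wf t : wf_nested (ndual t) = wf_nested t.
Proof. by elim: t => //= i s c t ->; rewrite ndual_vars. Qed.

Lemma lit_cpl i s x : lit_eval i s (cpl x) = ~~ lit_eval i s x.
Proof. by rewrite /lit_eval cplE; case: s; rewrite ?negbK. Qed.

Lemma ndual_eval t x : neval (ndual t) x = ~~ neval t (cpl x).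
Proof.
elim: t => [i s|i s c t IH] /=; first by rewrite lit_cpl negbK.
by case: c; rewrite /= IH lit_cpl ?negb_or ?negb_and !negbK.
Qed.

Lemma lro_dual f : lro f -> lro (dual f).
Proof.
case=> [[c H]|[t [wf H]]]; [left; exists (~~ c) | right; exists (ndual t)].
  by move=> x; rewrite /dual H.
by split; rewrite ?ndual_wf // => x; rewrite ndual_eval /dual H.
Qed.

End Dual.


Section Bounds.
Variable n : nat.
Implicit Types (x y z a : pt n) (f g : pt n -> bool).

Definition dom f d b c := forall x, f (fixc x d b) = c.

Lemma rel_wit f i : positive f -> relevantb f i ->
  exists x, ~~ f (fixc x i false) /\ f (fixc x i true).
Proof.
move=> P /relevantP [x H]; exists x.
case e1: (f (fixc x i false)) H; case e2: (f (fixc x i true)) => //= _.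
by move: e2; rewrite (P _ _ e1 (pleq_trans (pleq_fixcF x i) (pleq_fixcT x i))).
Qed.

Lemma exA f i : positive f -> relevantb f i -> exists a, minone f a /\ a i.
Proof.
move=> P ri; have [x [h0 h1]] := rel_wit P ri.
have [a [mo le]] := minex h1; exists a; split => //.
apply: contraT => /negbTE ai; case/negP: h0.
apply: (P a); first by case/minoneP: mo.
apply/pleqP => l al; case: (eqVneq l i) => [e|ne]; first by move: ai; rewrite -e al.
by move/pleqP: le => /(_ l al); rewrite !fixc_ne.
Qed.

Lemma LB0 f i : positive f -> relevantb f i -> r (rs f i false) + 1 <= r f.
Proof.
move=> P ri; have [a [mo ai]] := exA P ri.
rewrite (count_split P i) leq_add2l card_gt0; apply/set0Pn; exists a.
exact: missA.
Qed.

Lemma LB f i b : positive f -> relevantb f i -> r (rs f i b) + 1 <= r f.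
Proof.
case: b; last exact: LB0.
move=> P ri; rewrite -(r_dual f) -(r_dual (rs f i true)) dual_rs /=.
by apply: LB0; [exact: dual_pos | rewrite relevant_dual].
Qed.

Lemma UB0 f i : positive f -> dom f i true true -> r f <= r (rs f i false) + 1.
Proof.
move=> P D; rewrite (count_split P i) leq_add2l.
by rewrite -(cards1 (fixc (ptzero n) i true)); apply: subset_leq_card; apply: Dsub_dom.
Qed.

Lemma UB f d b c : positive f -> dom f d b c -> r f <= r (rs f d (~~ b)) + 1.
Proof.
move=> P; case: b; case: c => D.
- exact: UB0.
- rewrite (@const_r _ f false) ?addn1 // => x; apply/negbTE/negP => fx.
  by have := P _ _ fx (pleq_fixcT x d); rewrite D.
- rewrite (@const_r _ f true) ?addn1 // => x.
  by apply: (P (fixc x d false)); rewrite ?D // pleq_fixcF.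
- rewrite -(r_dual f) -(r_dual (rs f d (~~ false))) dual_rs /=.
  apply: UB0; first exact: dual_pos.
  by move=> x; rewrite /dual (_ : cpl (fixc x d true) = fixc (cpl x) d false) ?D // fixc_cpl.
Qed.

Lemma lro_dom g : lro g -> (exists c, forall x, g x = c) \/ (exists d b c, dom g d b c).
Proof.
case=> [H|[t [_ H]]]; [by left | right].
case: t H => [j s|j s [] t'] H.
- exists j, s, true => x; rewrite H /= /lit_eval fixc_at; by case: s H.
- exists j, s, true => x; rewrite H /= /lit_eval fixc_at; by case: s H.
- exists j, (~~ s), false => x; rewrite H /= /lit_eval fixc_at; by case: s H.
Qed.

Lemma Key0 f i : positive f -> relevantb f i -> r f = r (rs f i false) + 1 ->
  lro (rs f i false) -> exists d b c, dom f d b c.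
Proof.
move=> P ri Hr Hl.
set f0 := rs f i false.
have f0le x : f0 x -> f x by move=> h; apply: P h (pleq_fixcF _ _).
have f0pos : positive f0 by apply: rs_pos.
have [as_ [mo ai]] := exA P ri.
have Das : as_ \in Dset f i := missA mo ai.
have D1 : #|Dset f i| = 1 by move: Hr; rewrite (count_split P i) => /eqP; rewrite eqn_add2l => /eqP.
have U y : y \in Dset f i -> y = as_.
  move=> yD; have [w Dw] : exists w, Dset f i = [set w] by apply/cards1P/eqP.
  by move: yD Das; rewrite Dw !inE => /eqP -> /eqP ->.
have U1 a : minone f a -> a i -> a = as_ by move=> m1 a1; apply: U; apply: missA.
have U2 z : maxzero f z -> z i -> maxzero f0 z.
  move=> mz zi; apply: (imgZ mz zi).
  apply: contraT => nimg.
  have zD : z \in Dset f i by rewrite /Dset !inE nimg mz.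
  have := U z zD => e; move: mz; rewrite e => /maxzeroP [].
  by case/minoneP: mo => ->.
have fas : f as_ by case/minoneP: mo.
have core d : (forall x, f0 (fixc x d false) = false) -> as_ d -> dom f d false false.
  move=> Hd asd x; apply/negbTE/negP => fx.
  have [a [moa le]] := minex fx.
  have ad : a d = false.
    by apply/negP => /(pleqP _ _ le); rewrite fixc_at.
  case aiE: (a i).
    by move: asd; rewrite -(U1 a moa aiE) ad.
  have : f0 a by rewrite /f0 /rs fixc_idb //; case/minoneP: moa.
  by move=> h; have := Hd a; rewrite (fixc_idb ad) h.
have [[c Hc]|[d [b [c Hd]]]] := lro_dom Hl.
  case: c Hc => Hc.
    exists i, true, true => x; apply: (P (fixc x i false)); first by apply: Hc.
    by apply/pleqP => l; rewrite !fixcE; case: eqP.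
  by exists i, false, false.
case: c Hd => Hd.
  exists d, b, true => x; apply: f0le; apply: Hd.
case: b Hd => Hd.
  exists i, false, false => x; apply/negbTE/negP => h.
  have := f0pos x (fixc x d true) h (pleq_fixcT x d).
  by rewrite /f0 Hd.
case asd: (as_ d); first by exists d, false, false; apply: core.
case Hs: [exists s, (s != i) && as_ s]; last first.
  exists i, true, true => x; apply: (P as_) => //.
  apply/pleqP => l al; rewrite fixcE; case: eqP => // /eqP ne.
  by move/existsP: Hs; case; exists l; rewrite ne al.
case/existsP: Hs => s /andP [si ass].
case Hw: [forall w, ~~ f0 (fixc w s false)].
  exists s, false, false; apply: core => // x.
  by apply/negbTE; move/forallP: Hw; apply.
exfalso.
move/negbT: Hw; rewrite negb_forall => /existsP [w]; rewrite negbK => f0w.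
have ds : d != s by apply/eqP => e; move: ass; rewrite -e asd.
have di : d != i by apply/eqP => e; move: ai; rewrite -e asd.
set z := fixc (fixc (ptone n) d false) s false.
have fz : ~~ f z.
  apply/negP => fz; have [a [moa le]] := minex fz.
  have ad : a d = false.
    apply/negP => /(pleqP _ _ le); rewrite /z fixcE (negPf ds) fixc_at //.
  case aiE: (a i).
    have e := U1 a moa aiE.
    by move/pleqP: le => /(_ s); rewrite e ass /z fixc_at => /(_ isT).
  have : f0 a by rewrite /f0 /rs fixc_idb //; case/minoneP: moa.
  by move=> h; have := Hd a; rewrite (fixc_idb ad) => e; move: h; rewrite /f0 e.
have [z' [mz' lez]] := maxex fz.
have zi : z i.
  rewrite /z !fixcE; case: eqP => [e|_]; first by move: si; rewrite e eqxx.
  case: eqP => [e|_]; first by move: di; rewrite e eqxx.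
  by rewrite ffunE.
have zl l : l != s -> l != d -> z l.
  by move=> ls ld; rewrite /z !fixcE (negPf ls) (negPf ld) ffunE.
have z'i : z' i by apply: (pleqP _ _ lez).
have mz0 := U2 z' mz' z'i.
case z'd: (z' d).
  case/maxzeroP: mz' => nfz' _.
  move/negP: nfz'; apply; apply: f0le; apply: (f0pos _ _ f0w).
  apply/pleqP => l wl; case: (eqVneq l s) => [e|ls]; first by move: wl; rewrite e fixc_at.
  case: (eqVneq l d) => [->|ld]; first by rewrite z'd.
  by apply: (pleqP _ _ lez); apply: zl.
have z's : z' s.
  case/maxzeroP: mz0 => _ H.
  have := H (fixc z' s true).
  have -> : f0 (fixc z' s true) = false.
    by rewrite -(fixc_idb (b := false) (x := fixc z' s true) (k := d)) ?Hd // fixc_ne.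
  move=> /(_ isT (pleq_fixcT _ _)) <-; by rewrite fixc_at.
case/maxzeroP: mz' => nfz' _; move/negP: nfz'; apply; apply: (P as_) => //.
apply/pleqP => l al; case: (eqVneq l s) => [->//|ls].
case: (eqVneq l d) => [e|ld]; first by move: al; rewrite e asd.
by apply: (pleqP _ _ lez); apply: zl.
Qed.

Lemma Key f i b : positive f -> relevantb f i -> r f = r (rs f i b) + 1 ->
  lro (rs f i b) -> exists d b c, dom f d b c.
Proof.
case: b; last exact: Key0.
move=> P ri Hr Hl.
have [d [b [c D]]] : exists d b c, dom (dual f) d b c.
  apply: (@Key0 (dual f) i); first exact: dual_pos.
  - by rewrite relevant_dual.
  - by rewrite -(dual_rs f i true) !r_dual.
  - by rewrite -(dual_rs f i true); apply: lro_dual.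
exists d, (~~ b), (~~ c) => y; have := D (cpl y).
by rewrite /dual fixc_cpl cplK => <-; rewrite negbK.
Qed.

End Bounds.


Section Rel.
Variable n : nat.
Implicit Types (x y z a : pt n) (f g : pt n -> bool).

Lemma rel_rs_sub f i b l : relevantb (rs f i b) l -> (l != i) && relevantb f l.
Proof.
move=> /relevantP [x H]; apply/andP; split.
  apply/eqP => e; move: H; rewrite e /rs !fixcK; by rewrite eqxx.
apply/relevantP; exists (fixc x i b); move: H; rewrite /rs.
have [e|ne] := eqVneq l i; first by rewrite e !fixcK eqxx.
by rewrite !(fixcC _ _ _ ne).
Qed.

Lemma nrel_rs f i b : relevantb f i ->
  (forall l, l != i -> relevantb f l -> relevantb (rs f i b) l) ->
  nrel (rs f i b) = (nrel f).-1.
Proof.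
move=> ri H; rewrite /nrel (cardsD1 i [set l | relevantb f l]) inE ri /=.
apply: eq_card => l; rewrite !inE; apply/idP/idP.
  by move/rel_rs_sub.
by case/andP => li rl; apply: H.
Qed.

Lemma dom_rel f d b c : dom f d b c -> nrel f != 0 -> relevantb f d.
Proof.
move=> D; apply: contraR => nr; apply/eqP; apply: (@const_nrel0 _ f c) => x.
by rewrite -(irrel x b nr).
Qed.

Lemma dom_sub f d b c : dom f d b c ->
  forall l, l != d -> relevantb f l -> relevantb (rs f d (~~ b)) l.
Proof.
move=> D l ld /relevantP [x H]; apply/relevantP.
have E v : fixc (fixc x l v) d (x d) = fixc x l v.
  by apply: fixc_idb; rewrite fixc_ne // eq_sym.
case: (eqVneq (x d) b) => [xb|xnb].
  by move: H; rewrite -{1}(E false) -(E true) xb !D eqxx.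
exists x; rewrite /rs; have -> : ~~ b = x d by move: xnb; case: (x d); case: (b).
by rewrite !E.
Qed.

End Rel.


Section GV.
Variable n : nat.
Implicit Types (x y z a : pt n) (f g : pt n -> bool).

Lemma GV f : positive f -> 0 < nrel f -> exists i b, relevantb f i /\
  (forall l, l != i -> relevantb f l -> relevantb (rs f i b) l).
Proof.
move=> P; rewrite card_gt0 => /set0Pn [i0]; rewrite inE => ri0.
pose c l := #|[set a | minone f a && a l]|.
case: (arg_minnP c ri0) => i ri Hmin.
case H: [forall l, ((l != i) && relevantb f l) ==> relevantb (rs f i false) l].
  exists i, false; split => // l li rl.
  by move/forallP: H => /(_ l); rewrite li rl.
move/negbT: H; rewrite negb_forall => /existsP [j].
rewrite negb_imply => /andP [/andP [ji rj] nrj].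
have sub a : minone f a -> a j -> a i.
  move=> mo aj; apply: contraT => /negbTE ai; case/negP: nrj.
  apply/relevantP; exists a; rewrite /rs.
  have e1 : fixc (fixc a j true) i false = a by rewrite (fixc_idb aj) (fixc_idb ai).
  have e2 : fixc (fixc a j false) i false = fixc a j false.
    by apply: fixc_idb; rewrite fixc_ne // eq_sym.
  rewrite e1 e2; case/minoneP: mo => -> H.
  apply/negP => /eqP fa'.
  have := H _ fa' (pleq_fixcF a j) => /(congr1 (fun w : pt n => w j)).
  by rewrite fixc_at aj.
have twin a : minone f a -> a i = a j.
  move=> mo; apply/idP/idP; last exact: sub.
  have S : [set a | minone f a && a j] \subset [set a | minone f a && a i].
    by apply/subsetP => a'; rewrite !inE => /andP [m a'j]; rewrite m (sub a' m a'j).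
  have Eq : [set a | minone f a && a j] = [set a | minone f a && a i].
    apply/eqP; rewrite eqEcard S /=.
    have := Hmin j rj.
    by rewrite /c.
  move=> ai; have : a \in [set a | minone f a && a i] by rewrite inE mo ai.
  by rewrite -Eq inE => /andP [].
have T y : y j = false -> f (fixc y i true) = f (fixc y i false).
  move=> yj; apply/idP/idP; last by move=> h; apply: (P _ _ h); apply: pleq_trans (pleq_fixcF y i) (pleq_fixcT y i).
  move=> h; have [a [mo le]] := minex h.
  have aj : a j = false.
    by apply/negP => /(pleqP _ _ le); rewrite fixc_ne // yj.
  have ai : a i = false by rewrite twin.
  apply: (P a); first by case/minoneP: mo.
  apply/pleqP => l al; have [e|ne] := eqVneq l i; first by move: al; rewrite e ai.
  by rewrite fixc_ne //; move/pleqP: le => /(_ l al); rewrite fixc_ne.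
have T' y : y i = false -> f (fixc y j true) = f (fixc y j false).
  move=> yi; apply/idP/idP; last by move=> h; apply: (P _ _ h); apply: pleq_trans (pleq_fixcF y j) (pleq_fixcT y j).
  move=> h; have [a [mo le]] := minex h.
  have ai : a i = false.
    by apply/negP => /(pleqP _ _ le); rewrite fixc_ne ?yi // eq_sym.
  have aj : a j = false by rewrite -twin.
  apply: (P a); first by case/minoneP: mo.
  apply/pleqP => l al; have [e|ne] := eqVneq l j; first by move: al; rewrite e aj.
  by rewrite fixc_ne //; move/pleqP: le => /(_ l al); rewrite fixc_ne.
have Id (w : pt n) : w i = false -> f w = f (fixc (fixc w j false) i true).
  move=> wi.
  have e1 : f w = f (fixc w j false).
    case wj: (w j); last by rewrite fixc_idb.
    by rewrite -{1}(fixc_idb wj) T'.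
  rewrite e1 T ?fixc_at //.
  by rewrite (fixc_idb (x := fixc w j false) (k := i)) // fixc_ne // eq_sym.
exists i, true; split => // l li /relevantP [x H]; apply/relevantP.
case xi: (x i).
  exists x; rewrite /rs.
  by rewrite !(fixc_idb (x := fixc x l _) (k := i)) // fixc_ne // eq_sym.
have [e|lj] := eqVneq l j.
  move: H; rewrite e (Id (fixc x j false)) ?(Id (fixc x j true)) ?fixc_ne // ?(eq_sym i) //.
  by rewrite !fixcK eqxx.
exists (fixc x j false); rewrite /rs.
have jl : j != l by rewrite eq_sym.
rewrite !(fixcC _ _ _ jl) -!Id //; rewrite fixc_ne // eq_sym //.
Qed.
End GV.


Section Nested.
Variable n : nat.
Implicit Types (x y z a : pt n) (f g : pt n -> bool) (t : nested n).

Lemma litE j s x : lit_eval j s x = (x j == s).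
Proof. by rewrite /lit_eval; case: s; case: (x j). Qed.

Lemma neval_indep t i b x : i \notin nvars t -> neval t (fixc x i b) = neval t x.
Proof.
elim: t => [j s|j s c t IH] /=.
  by rewrite inE => ij; rewrite !litE fixc_ne // eq_sym.
rewrite inE negb_or => /andP [ij /IH ->].
by rewrite !litE fixc_ne // eq_sym.
Qed.

Lemma neval_vals t v : wf_nested t -> exists x, neval t x = v.
Proof.
elim: t v => [j s|j s c t IH] v /=.
  by exists (fixc (ptzero n) j (if v then s else ~~ s)); rewrite litE fixc_at; case: v; case: s.
case/andP => jt wft.
case: c; case: v.
- by exists (fixc (ptzero n) j s); rewrite litE fixc_at eqxx.
- have [y ty] := IH false wft; exists (fixc y j (~~ s)).
  by rewrite litE fixc_at neval_indep // ty; case: s.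
- have [y ty] := IH true wft; exists (fixc y j s).
  by rewrite litE fixc_at neval_indep // ty eqxx.
- by exists (fixc (ptzero n) j (~~ s)); rewrite litE fixc_at; case: s.
Qed.

Lemma nvars_rel t j : wf_nested t -> j \in nvars t -> relevantb (neval t) j.
Proof.
elim: t => [i s|i s c t IH] /=.
  rewrite inE => _ /eqP ->; apply/relevantP; exists (ptzero n).
  by rewrite !litE !fixc_at; case: s.
case/andP => it wft; rewrite inE => /orP [/eqP ->|jt].
  have [y ty] := neval_vals (~~ c) wft.
  apply/relevantP; exists y; rewrite !litE !fixc_at !neval_indep // ty.
  by case: (c); case: (s).
have ij : i != j by apply: contraNneq it => ->.
have /relevantP [y H] := IH wft jt.
apply/relevantP; exists (fixc y i (if c then ~~ s else s)).
have E u v : neval t (fixc (fixc y i u) j v) = neval t (fixc y j v).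
  by rewrite (fixcC _ _ _ ij) neval_indep.
rewrite /= !litE !E !fixcE eqxx (negPf ij).
by move: H; case: (c); case: (s); case: (neval t _); case: (neval t _).
Qed.
End Nested.

Section Main.
Variable n : nat.
Implicit Types (x y z a : pt n) (f g : pt n -> bool) (t : nested n).

Lemma lro_dom2 f : lro f -> (exists c, forall x, f x = c) \/
  (exists d b c, dom f d b c /\ lro (rs f d (~~ b))).
Proof.
case=> [H|[t [wft H]]]; [by left | right].
case: t wft H => [j s|j s [] t'] wft H.
- exists j, s, true; split.
    by move=> x; rewrite H /= litE fixc_at eqxx.
  by left; exists false => x; rewrite /rs H /= litE fixc_at; case: (s).
- move: wft => /= /andP [jt wft].
  exists j, s, true; split.
    by move=> x; rewrite H /= litE fixc_at eqxx.
  right; exists t'; split => // x; rewrite /rs H /= litE fixc_at neval_indep //.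
  by case: (s).
- move: wft => /= /andP [jt wft].
  exists j, (~~ s), false; split.
    by move=> x; rewrite H /= litE fixc_at; case: (s).
  right; exists t'; split => // x; rewrite /rs H /= litE fixc_at neval_indep //.
  by rewrite negbK eqxx.
Qed.

Lemma build f d b c : dom f d b c -> relevantb f d -> lro (rs f d (~~ b)) -> lro f.
Proof.
move=> D rd Hg.
have fE x : f x = if x d == b then c else rs f d (~~ b) x.
  case: (eqVneq (x d) b) => [e|ne]; first by rewrite -(D x) fixc_idb.
  by rewrite /rs fixc_idb //; move: ne; case: (x d); case: (b).
case: Hg => [[c' Hc]|[t [wft Ht]]].
  have cc : c' = ~~ c.
    apply: contraTeq rd => ne; apply/negP => /relevantP [x].
    rewrite !fE !fixc_at !Hc.
    by move: ne; case: (b); case: (c); case: (c').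
  right; exists (Lit d (if c then b else ~~ b)); split => // x.
  rewrite fE Hc cc /= litE; by case: (c); case: (b); case: (x d).
have dt : d \notin nvars t.
  have Eg : neval t = rs f d (~~ b) by apply: functional_extensionality => x; rewrite Ht.
  apply/negP => /(nvars_rel wft); rewrite Eg => /relevantP [x].
  by rewrite /rs !fixcK eqxx.
right; case: (c) fE => fE.
  exists (Node d b true t); split; first by rewrite /= dt.
  move=> x; rewrite fE Ht /= litE; by case: (x d == b).
exists (Node d (~~ b) false t); split; first by rewrite /= dt.
move=> x; rewrite fE Ht /= litE.
by case: (eqVneq (x d) b) => [->|]; [case: (b) | case: (x d); case: (b)].
Qed.

Lemma main_ind k : forall f, positive f -> nrel f = k ->
  [/\ k.+1 <= r f, (r f = k.+1 -> lro f) & (lro f -> r f <= k.+1)].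
Proof.
elim: k => [|k IH] f P nr.
  have C := nrel0_const nr.
  have H1 : r f = 1 by apply: (const_r (c := f (ptzero n))) => x; apply: C.
  split; rewrite ?H1 //.
  by move=> _; left; exists (f (ptzero n)) => x; apply: C.
have [i [b [ri Hsub]]] := GV P (ltac:(by rewrite nr)).
have nrb : nrel (rs f i b) = k by rewrite nrel_rs // nr.
have [lb1 eq1 ub1] := IH _ (rs_pos (k := i) (b := b) P) nrb.
have LBi := LB b P ri.
have part1 : k.+2 <= r f by move: LBi lb1; lia.
have dnr d b' c' : dom f d b' c' -> relevantb f d /\ nrel (rs f d (~~ b')) = k.
  move=> D; have rd : relevantb f d by apply: dom_rel D _; rewrite nr.
  by split => //; rewrite nrel_rs ?nr //; apply: dom_sub D.
split => //.
  move=> Hr.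
  have rb : r (rs f i b) = k.+1.
    by move: LBi lb1; rewrite Hr; lia.
  have [d [b' [c' D]]] := Key (b := b) P ri (ltac:(by rewrite Hr rb addn1)) (eq1 rb).
  have [rd nrd] := dnr _ _ _ D.
  have [lb2 eq2 _] := IH _ (rs_pos (k := d) (b := ~~ b') P) nrd.
  apply: (build D rd); apply: eq2.
  have := LB (~~ b') P rd; rewrite Hr; move: lb2; lia.
case/lro_dom2 => [[c Hc]|[d [b' [c' [D Hl]]]]].
  by move: nr; rewrite (const_nrel0 Hc).
have [rd nrd] := dnr _ _ _ D.
have [_ _ ub2] := IH _ (rs_pos (k := d) (b := ~~ b') P) nrd.
have := UB P D; have := ub2 Hl; lia.
Qed.

End Main.

Theorem mainTheorem1 (n : nat) (f : pt n -> bool) (k : nat) :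
  positive f -> nrel f = k ->
  k.+1 <= r f /\ (r f = k.+1 <-> lro f).
Proof.
move=> P nr; have [h1 h2 h3] := main_ind P nr.
split => //; split => // /h3 h; move: h h1; lia.
Qed.
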